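(* Let $n\ge1$ with $\gcd(n,q)=1$, $\mathbb{F}\supseteq\mathbb{F}_q$ a field containing the $n$-th roots of unity, $\gamma$ a primitive $n$-th root of unity, $\ell\ge2$ and $t\ge0$ integers. Let $a,b\le n$ be positive integers with $\gcd(a,n)=\gcd(b,n)=1$, and let $S,R\subseteq\{1,\dots,n\}$ satisfy $|\overline{S}|\le|S|+\mathrm{d}_R-2$, $|S|>t$ and $\mathrm{d}_S>t$. Let $A,B\subseteq\mathbb{F}^n$ be the cyclic codes with generating sets $aS$ and $bR$ respectively, let $\tilde C=\{\mathbf{c}\in\mathbb{F}^n: M(aS+bR)\mathbf{c}^T=0\}$ and $k=\dim\tilde C$. Assume (i) $B^\perp*\tilde C^{i}\subsetneq\mathbb{F}^n$ for all $i\in\{1,\dots,\ell-1\}$; (ii) every nonzero cyclic subcode of $B$ is non-degenerated. Define integers $\delta$ and $\gamma_1,\dots,\gamma_{\ell-1}$ by $n-k=|S|+|R|-1+\delta$ and $\dim B=\dim\big((B^\perp*\tilde C^i)^\perp\big)+i\dim\tilde C-i+\gamma_i$ for $i=1,\dots,\ell-1$. If $$t\le \ell n-\Big[\frac{\ell(\ell+1)}{2}(k-1)+\ell(|S|+\delta)+\sum_{i=1}^{\ell-1}\gamma_i\Big],$$ then $(A,B)$ is an $\ell$-power $t$-error locating pair for $\tilde C$.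
   Context: For $T=\{i_1,\dots,i_m\}\subseteq\{1,\dots,n\}$ (indices mod $n$), $M(T)$ is the $m\times n$ matrix with rows $(1,\gamma^{i_j},\dots,\gamma^{(n-1)i_j})$; the code with generating set $T$ is $\{\mathbf{u}M(T):\mathbf{u}\in\mathbb{F}^m\}$. $\mathrm{d}_T$ denotes the minimum distance of $\{\mathbf{c}\in\mathbb{F}^n:M(T)\mathbf{c}^T=0\}$. $\overline{S}$ is the smallest set of consecutive indices modulo $n$ containing $S$; $aS=\{as\bmod n:s\in S\}$; $S+R=\{s+r\bmod n\}$. Componentwise product $*$, $X*Y$ the span of products, $X^1=X$, $X^i=X*X^{i-1}$; duals w.r.t. $\langle\mathbf{u},\mathbf{v}\rangle=\sum u_iv_i$ on $\mathbb{F}^n$; $\mathrm{d}$ minimum distance. A code $H$ is degenerated if $\dim\{\mathbf{x}:\mathbf{x}*H\subseteq H\}>1$, equivalently it is a direct sum of nonzero subcodes with disjoint supports or every generator matrix has a zero column. A pair $(A,B)$ of codes in $\mathbb{F}^n$ is an $\ell$-power $t$-error locating pair for a code $C$ if: (1) $A*B\subseteq C^\perp$; (2) $\dim A>t$; (3) $\mathrm{d}(A^\perp)>t$; (4) $\mathrm{d}(A)+\mathrm{d}(C)>n$; (5) $\dim B+\sum_{i=2}^{\ell}\dim(B^\perp*C^{i-1})^\perp\ge t$. *)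

(* Defs.v *)
(* Codes in F^n are represented by square matrices 'M[F]_n,
   the code being the row space of the matrix (mxalgebra %MS conventions). *)
From HB Require Import structures.
From mathcomp Require Import all_boot all_order all_algebra.
From mathcomp Require Import boolp.
Set Implicit Arguments. Unset Strict Implicit. Unset Printing Implicit Defensive.
Import Order.TTheory GRing.Theory Num.Theory.
Local Open Scope ring_scope.

Section Codes.
Variable F : fieldType.
Variable n : nat.

Definition rowprod (u v : 'rV[F]_n) : 'rV[F]_n := \row_j (u 0 j * v 0 j).

Definition cprod (X Y : 'M[F]_n) : 'M[F]_n :=
  (\sum_(i < n) \sum_(j < n) <<rowprod (row i X) (row j Y)>>)%MS.

(* X^i with X^1 = X, X^i = X * X^(i-1)  (the value at i = 0 is irrelevant) *)
Definition cpow (X : 'M[F]_n) (i : nat) : 'M[F]_n := iter i.-1 (cprod X) X.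

Definition dual (X : 'M[F]_n) : 'M[F]_n := kermx X^T.

Definition wt (v : 'rV[F]_n) : nat := #|[set j | v 0 j != 0]|.

(* minimum distance; the zero code gets distance n+1 (stands for infinity) *)
Definition mindist (X : 'M[F]_n) : nat :=
  \big[minn/n.+1]_(m < n.+1 |
     `[< exists v : 'rV[F]_n, [/\ (v <= X)%MS, v != 0 & wt v = m] >]) (m : nat).

(* M(T): rows (1, g^i, ..., g^((n-1) i)) for i in T; indices i in {1..n}
   are represented modulo n as elements of 'I_n; rows for i notin T are 0,
   which changes neither the row space nor the kernel. *)
Definition Mx (g : F) (T : {set 'I_n}) : 'M[F]_n :=
  \matrix_(i, j) if i \in T then g ^+ (i * j) else 0.

Definition dT (g : F) (T : {set 'I_n}) : nat := mindist (dual (Mx g T)).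

Definition smul (a : nat) (S : {set 'I_n}) : {set 'I_n} :=
  [set i : 'I_n | [exists s in S, (i : nat) == (a * s) %% n]%N].

Definition ssum (S R : {set 'I_n}) : {set 'I_n} :=
  [set i : 'I_n | [exists s in S, exists r in R, (i : nat) == (s + r) %% n]%N].

(* |bar S| : size of the smallest set of cyclically consecutive indices
   {c, c+1, ..., c+L-1} (mod n) containing S *)
Definition hull_size (S : {set 'I_n}) : nat :=
  \big[minn/n]_(c < n) \big[minn/n]_(L < n.+1 |
       S \subset [set i : 'I_n | ((i + n - c) %% n < L)%N]) (L : nat).

(* cyclic shift (v_0,...,v_{n-1}) |-> (v_{n-1}, v_0, ..., v_{n-2}) *)
Definition shiftmx : 'M[F]_n := \matrix_(i, j) ((j : nat) == (i + 1) %% n)%N%:R.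

Definition cyclic_code (H : 'M[F]_n) : bool := (H *m shiftmx <= H)%MS.

(* { x | x * H subset H } *)
Definition stab (H : 'M[F]_n) : 'M[F]_n :=
  (\bigcap_(i < n) kermx (diag_mx (row i H) *m cokermx H))%MS.

Definition degenerated (H : 'M[F]_n) : bool := (1 < \rank (stab H))%N.

Definition locating_pair (l t : nat) (A B C : 'M[F]_n) : Prop :=
  [/\ (cprod A B <= dual C)%MS,
      (t < \rank A)%N,
      (t < mindist (dual A))%N,
      (n < mindist A + mindist C)%N &
      (t <= \rank B + \sum_(2 <= i < l.+1) \rank (dual (cprod (dual B) (cpow C i.-1))))%N].

End Codes.

(* Main.v *)
Require Import Defs.
From HB Require Import structures.
From mathcomp Require Import all_boot all_order all_algebra.
From mathcomp Require Import boolp.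
From mathcomp Require Import zify ring.
Import Order.TTheory GRing.Theory Num.Theory.
Local Open Scope ring_scope.

Module Helpers.
Set Implicit Arguments. Unset Strict Implicit. Unset Printing Implicit Defensive.

Section Aux.
Variable F : fieldType.
Variable n : nat.
Implicit Types X Y : 'M[F]_n.

Lemma wt_le (v : 'rV[F]_n) : (wt v <= n)%N.
Proof. by rewrite /wt (leq_trans (max_card _)) ?card_ord. Qed.

Lemma bigmin_le (I : finType) (P : pred I) (f : I -> nat) x0 i :
  P i -> (\big[minn/x0]_(j | P j) f j <= f i)%N.
Proof.
move=> Pi; rewrite -big_filter.
have : i \in filter P (index_enum I) by rewrite mem_filter Pi mem_index_enum.
elim: (filter _ _) => [|j s IH] //; rewrite big_cons in_cons => /orP[/eqP->|/IH h].
  exact: geq_minl.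
exact: leq_trans (geq_minr _ _) h.
Qed.

Lemma mindist_le X v : (v <= X)%MS -> v != 0 -> (mindist X <= wt v)%N.
Proof.
move=> vX v0; have lt : (wt v < n.+1)%N by rewrite ltnS wt_le.
rewrite /mindist; apply: (@bigmin_le _ _ (fun m : 'I_n.+1 => (m : nat)) _ (Ordinal lt)).
by apply/asboolP; exists v.
Qed.

Lemma mindist_ge X m : (m <= n.+1)%N ->
  (forall v : 'rV[F]_n, (v <= X)%MS -> v != 0 -> (m <= wt v)%N) -> (m <= mindist X)%N.
Proof.
move=> mn H; rewrite /mindist; elim/big_ind: _ => //.
  by move=> x y hx hy; rewrite leq_min hx hy.
move=> i /asboolP [v [vX v0 <-]]; exact: H.
Qed.

Lemma mindist_ub X : (mindist X <= n.+1)%N.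
Proof. rewrite /mindist; elim/big_ind: _ => //.
  by move=> x y hx hy; rewrite geq_min hx.
by move=> i _; rewrite ltnW.
Qed.

Lemma dual_sub X Y : (X <= Y)%MS -> (dual Y <= dual X)%MS.
Proof.
move=> /submxP [W ->]; rewrite /dual sub_kermx.
by rewrite trmx_mul mulmxA mulmx_ker mul0mx.
Qed.

Lemma sub_dual_dual X (v : 'rV[F]_n) : (v <= X)%MS -> (v <= dual (dual X))%MS.
Proof.
move=> /submxP [W ->]; rewrite /dual sub_kermx -mulmxA.
have -> : X *m (kermx X^T)^T = (kermx X^T *m X^T)^T.
  by rewrite [RHS]trmx_mul trmxK.
by rewrite mulmx_ker trmx0 mulmx0.
Qed.

Definition PJ (J : {set 'I_n}) : 'M[F]_n := diag_mx (\row_j (j \in J)%:R).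

Lemma mul_PJ m (M : 'M[F]_(m, n)) J : M *m PJ J = \matrix_(i, j) (M i j * (j \in J)%:R).
Proof. by rewrite /PJ mul_mx_diag; apply/matrixP => i j; rewrite !mxE. Qed.

Lemma PJ_mul J K : PJ J *m PJ K = PJ (J :&: K).
Proof.
rewrite mul_PJ; apply/matrixP => i j; rewrite /PJ !mxE inE.
by case: eqP => [->|_]; rewrite ?mulr0n ?mul0r // !mulr1n; case: (j \in J); case: (j \in K); rewrite /= ?mulr1 ?mulr0 ?mul0r.
Qed.

Lemma PJ_add J : PJ J + PJ (~: J) = 1%:M.
Proof.
apply/matrixP => i j; rewrite /PJ !mxE inE.
by case: (i == j); case: (i \in J); rewrite /= ?mulr0n ?mulr1n ?addr0 ?add0r.
Qed.

Lemma rank_PJ_le J : (\rank (PJ J) <= #|J|)%N.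
Proof.
rewrite /PJ diag_mx_sum_delta.
have -> : #|J| = (\sum_(i < n) (i \in J))%N by rewrite -sum1_card big_mkcond.
elim/big_ind2: _ => //; first by rewrite mxrank0.
  move=> x1 x2 y1 y2 h1 h2; apply: leq_trans (mxrank_add _ _) _; exact: leq_add.
move=> i _; rewrite mxE; case: (i \in J) => /=.
  by rewrite scale1r mxrank_delta.
by rewrite scale0r mxrank0.
Qed.

Lemma rank_PJ J : \rank (PJ J) = #|J|.
Proof.
apply/eqP; rewrite eqn_leq rank_PJ_le /=.
have h1 := rank_PJ_le (~: J).
have h2 : (n <= \rank (PJ J) + \rank (PJ (~: J)))%N.
  by rewrite -{1}(mxrank1 F n) -(PJ_add J) mxrank_add.
have h3 := cardsC J; rewrite card_ord in h3.
have := leq_trans h2 (leq_add (leqnn _) h1); by rewrite -{1}h3 leq_add2r.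
Qed.

End Aux.

Section Aux2.
Variable F : fieldType.
Variable n : nat.
Hypothesis n_gt0 : (0 < n)%N.

Definition wnd (c : 'I_n) (L : nat) : {set 'I_n} := [set i : 'I_n | ((i + n - c) %% n < L)%N].

Lemma minn_case (P : nat -> Prop) x y : P x -> P y -> P (minn x y).
Proof. by move=> hx hy; case: (leqP x y). Qed.

Lemma hull_le (S : {set 'I_n}) : (hull_size S <= n)%N.
Proof.
rewrite /hull_size; elim/big_ind: _ => //; first by move=> x y hx _; rewrite geq_min hx.
move=> c _; elim/big_ind: _ => //; first by move=> x y hx _; rewrite geq_min hx.
by move=> L _; rewrite -ltnS.
Qed.

Lemma hull_wnd (S : {set 'I_n}) : exists c : 'I_n, S \subset wnd c (hull_size S).
Proof.
have wn : forall c : 'I_n, S \subset wnd c n.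
  by move=> c; apply/subsetP => i _; rewrite inE ltn_pmod.
rewrite /hull_size; apply: (big_ind (fun m => exists c : 'I_n, S \subset wnd c m)).
- by exists (Ordinal n_gt0).
- by move=> x y hx hy; apply: (minn_case (P := fun m => exists c : 'I_n, S \subset wnd c m)).
move=> c _; exists c; apply: (big_ind (fun m => S \subset wnd c m)) => //.
  by move=> x y hx hy; apply: (minn_case (P := fun m => S \subset wnd c m)).
Qed.

Lemma Mx_entry (g : F) (T : {set 'I_n}) (u : 'rV[F]_n) j :
  (u *m Mx g T) 0 j = \sum_(i in T) u 0 i * g ^+ (i * j).
Proof.
rewrite mxE [RHS]big_mkcond; apply: eq_bigr => i _; rewrite mxE.
by case: ifP => _; rewrite ?mulr0.
Qed.

Variable g : F.
Hypothesis prim : n.-primitive_root g.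

Lemma prim_inj (i j : 'I_n) : g ^+ i = g ^+ j -> i = j.
Proof.
move/eqP; rewrite (eq_prim_root_expr prim) !modn_small // => /eqP h; exact: val_inj.
Qed.

Lemma zero_lemma (T : {set 'I_n}) (c : 'I_n) L (f : 'I_n -> F) (J : {set 'I_n}) :
  T \subset wnd c L -> (L <= #|J|)%N ->
  (forall j, j \in J -> \sum_(s in T) f s * g ^+ (s * j) = 0) ->
  forall s, s \in T -> f s = 0.
Proof.
move=> sub LJ hJ.
pose e (s : 'I_n) := ((s + n - c) %% n)%N.
have einj : forall s s' : 'I_n, e s = e s' -> s = s'.
  move=> s s'; rewrite /e -!addnBA ?(ltnW (ltn_ord c)) // => /eqP.
  rewrite eqn_modDr !modn_small // => /eqP; exact: val_inj.
pose Q : {poly F} := \sum_(s in T) f s *: 'X^(e s).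
have coefQ m : Q`_m = \sum_(s in T) f s * (m == e s)%:R.
  by rewrite coef_sum; apply: eq_bigr => s _; rewrite coefZ coefXn.
have sizeQ : (size Q <= L)%N.
  apply/leq_sizeP => m Lm; rewrite coefQ big1 // => s sT.
  have : (e s < L)%N by have := subsetP sub s sT; rewrite inE.
  move=> h; case: eqP => [E|_]; last by rewrite mulr0.
  by move: Lm; rewrite E leqNgt h.
have rootQ j : j \in J -> Q.[g ^+ j] = 0.
  move=> jJ; rewrite horner_sum.
  rewrite (eq_bigr (fun s => g ^+ (j * (n - c)) * (f s * g ^+ (s * j)))).
    by rewrite -mulr_sumr hJ // mulr0.
  move=> s _; rewrite hornerZ hornerXn -exprM mulrCA -exprD.
  congr (_ * _); rewrite -(prim_expr_mod prim) -[in RHS](prim_expr_mod prim).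
  congr (g ^+ _); rewrite /e -addnBA ?(ltnW (ltn_ord c)) //.
  by rewrite modnMmr mulnDr addnC (mulnC j s).
have Q0 : Q = 0.
  apply/eqP; apply: contraT => nz.
  pose rs := [seq g ^+ (val j) | j <- enum J].
  have := max_poly_roots nz (rs := rs).
  have -> : all (root Q) rs.
    by apply/allP => x /mapP [j jJ ->]; apply/rootP; apply: rootQ; rewrite mem_enum in jJ.
  have -> : uniq rs.
    rewrite map_inj_in_uniq ?enum_uniq // => x y _ _ h; exact: prim_inj.
  rewrite size_map -cardE => /(_ isT isT) h.
  by move: (leq_trans h (leq_trans sizeQ LJ)); rewrite ltnn.
move=> s sT; have := coefQ (e s); rewrite Q0 coef0 (bigD1 s) //= eqxx mulr1.
rewrite big1 ?addr0 => [<-|] // s' /andP [_ ne].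
case: eqP => [h|_]; last by rewrite mulr0.
by move: ne; rewrite (einj _ _ h) eqxx.
Qed.

Lemma codeword_zero (T : {set 'I_n}) (c : 'I_n) L (J : {set 'I_n}) (x : 'rV[F]_n) :
  T \subset wnd c L -> (L <= #|J|)%N -> (x <= Mx g T)%MS ->
  (forall j, j \in J -> x 0 j = 0) -> x = 0.
Proof.
move=> sub LJ /submxP [u ->] hJ.
have z := zero_lemma (f := fun s => u 0 s) sub LJ.
have h : forall s, s \in T -> u 0 s = 0.
  by apply: z => j jJ; rewrite -Mx_entry hJ.
apply/rowP => j; rewrite Mx_entry mxE big1 // => s sT; by rewrite h // mul0r.
Qed.

Lemma rank_Mx (T : {set 'I_n}) : \rank (Mx g T) = #|T|.
Proof.
rewrite -(rank_PJ F T); apply/eqP; rewrite eqn_leq; apply/andP; split.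
  have -> : Mx g T = PJ F T *m Mx g T.
    apply/matrixP => i j; rewrite mul_diag_mx !mxE.
    by case: ifP => _; rewrite ?mul1r ?mul0r.
  exact: mxrankM_maxl.
have sk : (kermx (Mx g T) <= kermx (PJ F T))%MS.
  apply/row_subP => i; rewrite sub_kermx.
  set r := row i _.
  have rz : r *m Mx g T = 0 by rewrite /r -row_mul mulmx_ker row0.
  pose c := Ordinal n_gt0.
  have sub : T \subset wnd c n by apply/subsetP => k _; rewrite inE ltn_pmod.
  have z := zero_lemma (f := fun s => r 0 s) (J := setT) sub.
  rewrite cardsT card_ord leqnn in z.
  have h : forall s, s \in T -> r 0 s = 0.
    by apply: z => // j _; rewrite -Mx_entry rz mxE.
  rewrite mul_PJ; apply/eqP/rowP => j; rewrite [LHS]mxE [RHS]mxE.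
  by case: (boolP (j \in T)) => jT; [rewrite h // mul0r | rewrite /= mulr0n mulr0].
have := mxrankS sk; rewrite !mxrank_ker.
have := rank_leq_col (Mx g T); have := rank_leq_col (PJ F T).
lia.
Qed.

End Aux2.

Section Aux3.
Variable F : fieldType.
Variable n : nat.
Hypothesis n_gt0 : (0 < n)%N.
Variable G : F.
Hypothesis prim : n.-primitive_root G.

Lemma primX a : coprime a n -> n.-primitive_root (G ^+ a).
Proof. by move=> co; rewrite prim_root_exp_coprime. Qed.

Definition mulo (a : nat) (s : 'I_n) : 'I_n := Ordinal (ltn_pmod (a * s) n_gt0).

Lemma G_mulo a (s : 'I_n) j : G ^+ (mulo a s * j) = (G ^+ a) ^+ (s * j).
Proof.
rewrite -exprM -(prim_expr_mod prim) -[RHS](prim_expr_mod prim) /=.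
by rewrite modnMml mulnA.
Qed.

Lemma mulo_inj a : coprime a n -> injective (mulo a).
Proof.
move=> co s s' h; apply: (prim_inj (primX co)).
have e1 := G_mulo a s 1; have e2 := G_mulo a s' 1; rewrite !muln1 in e1 e2.
by rewrite -e1 -e2 h.
Qed.

Lemma smulP a (S : {set 'I_n}) i : reflect (exists2 s, s \in S & i = mulo a s) (i \in smul a S).
Proof.
rewrite inE; apply: (iffP existsP) => [[s /andP [sS /eqP h]]|[s sS ->]].
  by exists s => //; apply: val_inj.
by exists s; rewrite sS eqxx.
Qed.

Lemma row_Mx (g : F) (T : {set 'I_n}) i :
  row i (Mx g T) = if i \in T then \row_j (g ^+ (i * j)) else 0.
Proof. by apply/rowP => j; rewrite !mxE; case: ifP => _; rewrite ?mxE. Qed.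

Lemma Mx_smul a (S : {set 'I_n}) : (Mx G (smul a S) == Mx (G ^+ a) S)%MS.
Proof.
apply/andP; split; apply/row_subP => i; rewrite row_Mx; case: ifP => h; rewrite ?sub0mx //.
  case/smulP: h => s sS ->.
  have -> : \row_j G ^+ (mulo a s * j) = row s (Mx (G ^+ a) S).
    by rewrite row_Mx sS; apply/rowP => j; rewrite !mxE G_mulo.
  exact: row_sub.
have hm : mulo a i \in smul a S by apply/smulP; exists i.
have -> : \row_j (G ^+ a) ^+ (i * j) = row (mulo a i) (Mx G (smul a S)).
  by rewrite row_Mx hm; apply/rowP => j; rewrite !mxE G_mulo.
exact: row_sub.
Qed.

Lemma card_smul a (S : {set 'I_n}) : coprime a n -> #|smul a S| = #|S|.
Proof.
move=> co; rewrite -(rank_Mx n_gt0 prim) -(rank_Mx n_gt0 (primX co)).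
exact/eqmx_rank/Mx_smul.
Qed.

Lemma dual_eqmx (X Y : 'M[F]_n) : (X == Y)%MS -> (dual X == dual Y)%MS.
Proof. by case/andP => h1 h2; rewrite /eqmx !dual_sub. Qed.

Lemma Mx_tr_entry (g : F) (T : {set 'I_n}) (v : 'rV[F]_n) r :
  (v *m (Mx g T)^T) 0 r = if r \in T then \sum_k v 0 k * g ^+ (r * k) else 0.
Proof.
rewrite mxE; case: ifP => h.
  by apply: eq_bigr => k _; rewrite !mxE h.
by rewrite big1 // => k _; rewrite !mxE h mulr0.
Qed.

Lemma dual_perm b (R : {set 'I_n}) (v : 'rV[F]_n) : coprime b n ->
  (v <= dual (Mx (G ^+ b) R))%MS -> v != 0 -> (dT G R <= wt v)%N.
Proof.
move=> co vd v0.
have inj := mulo_inj co.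
pose v' := \row_k v 0 (invF inj k).
have hv' j : v' 0 (mulo b j) = v 0 j by rewrite mxE invF_f.
have vd' : (v' <= dual (Mx G R))%MS.
  rewrite /dual sub_kermx; apply/eqP/rowP => r; rewrite Mx_tr_entry mxE.
  move: vd; rewrite /dual sub_kermx => /eqP/rowP/(_ r); rewrite Mx_tr_entry mxE.
  case: ifP => // _ h; apply: (etrans _ h).
  rewrite (reindex_inj inj) /=; apply: eq_bigr => j _.
  by rewrite hv' mulnC G_mulo mulnC.
have v'0 : v' != 0.
  move: v0; apply: contra_neq => h; apply/rowP => j; by rewrite -hv' h !mxE.
have wt' : wt v' = wt v.
  rewrite /wt -(card_preimset _ inj); apply: eq_card => j.
  by rewrite !inE hv'.
rewrite -wt'; exact: mindist_le.
Qed.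

End Aux3.

Lemma exists_subset (T : finType) (X : {set T}) m :
  (m <= #|X|)%N -> exists J : {set T}, J \subset X /\ #|J| = m.
Proof.
elim: m => [|m IH] h; first by exists set0; rewrite sub0set cards0.
have [J [JX cJ]] := IH (ltnW h).
have : (0 < #|X :\: J|)%N by rewrite cardsD (setIidPr JX) cJ subn_gt0.
case/card_gt0P => x; rewrite inE => /andP [xJ xX].
exists (x |: J); split; first by rewrite subUset sub1set xX JX.
by rewrite cardsU1 xJ cJ.
Qed.

Section Aux4.
Variable F : fieldType.
Variable n : nat.

Lemma PJ0 : PJ F (set0 : {set 'I_n}) = 0.
Proof. by apply/matrixP => i j; rewrite !mxE inE /= mulr0n mul0rn. Qed.

Lemma PJ_tr (J : {set 'I_n}) : (PJ F J)^T = PJ F J.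
Proof. exact: tr_diag_mx. Qed.

Lemma mindist_pos (X : 'M[F]_n) : (0 < mindist X)%N.
Proof.
apply: mindist_ge => // v _ v0; rewrite /wt; apply/card_gt0P.
have [j hj] : exists j, v 0 j != 0.
  apply/existsP; move: v0; apply: contraR => /existsPn h.
  by apply/eqP/rowP => j; rewrite mxE; apply/eqP; rewrite -[_ == _]negbK h.
by exists j; rewrite inE.
Qed.

Lemma rank_orth (X Y : 'M[F]_n) (I : {set 'I_n}) :
  X *m Y^T = 0 -> X *m PJ F I = X -> Y *m PJ F I = Y ->
  (\rank X + \rank Y <= #|I|)%N.
Proof.
move=> XY XI YI.
set K := kermx X^T.
have hY : (Y <= K)%MS.
  by rewrite sub_kermx -[Y]trmxK -trmx_mul XY trmx0.
have hY2 : (Y <= K *m PJ F I)%MS by rewrite -YI submxMr.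
set Pc := PJ F (~: I).
have hP1 : (Pc <= K)%MS.
  rewrite sub_kermx /Pc -PJ_tr -trmx_mul -XI -mulmxA PJ_mul.
  by rewrite setICr PJ0 mulmx0 trmx0.
have hP2 : (Pc <= kermx (PJ F I))%MS.
  by rewrite sub_kermx /Pc PJ_mul setIC setICr PJ0.
have h1 : (\rank Pc <= \rank (K :&: kermx (PJ F I)))%N by apply: mxrankS; rewrite sub_capmx hP1 hP2.
have h2 := mxrank_mul_ker K (PJ F I).
have h3 : \rank K = (n - \rank X)%N by rewrite mxrank_ker mxrank_tr.
have h4 := mxrankS hY2.
have h7 : (#|I| <= n)%N by rewrite -[X in (_ <= X)%N]card_ord max_card.
have h5 : \rank Pc = (n - #|I|)%N.
  rewrite /Pc rank_PJ; have h := cardsC I; rewrite card_ord in h.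
  by apply/eqP; rewrite -(eqn_add2l #|I|) subnKC ?h.
have h6 := rank_leq_col X.
lia.
Qed.

End Aux4.

Section Roos.
Variable F : fieldType.
Variable n : nat.
Hypothesis n_gt0 : (0 < n)%N.
Variable G : F.
Hypothesis prim : n.-primitive_root G.
Variables (a b : nat) (S R : {set 'I_n}).
Hypothesis coa : coprime a n.
Hypothesis cob : coprime b n.

Let A' := Mx (G ^+ a) S.
Let B' := Mx (G ^+ b) R.
Let M := Mx G (ssum (smul a S) (smul b R)).

Lemma arith1 (s d rx ry i L : nat) : (rx + ry <= i)%N -> (s + i <= rx + L)%N ->
  (d.-1 <= ry)%N -> (L + 2 <= s + d)%N -> (0 < d)%N -> False.
Proof. lia. Qed.

Lemma nz_entry (v : 'rV[F]_n) : v != 0 -> exists j, v 0 j != 0.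
Proof.
move=> v0; apply/existsP; move: v0; apply: contraR => /existsPn h.
by apply/eqP/rowP => j; rewrite mxE; apply/eqP; rewrite -[_ == _]negbK h.
Qed.

Lemma orth_ADB (c : 'rV[F]_n) : (c <= dual M)%MS -> A' *m diag_mx c *m B'^T = 0.
Proof.
move=> /sub_kermxP hc; rewrite mul_mx_diag; apply/matrixP => s r; rewrite !mxE.
case sS: (s \in S); last by rewrite big1 // => j _; rewrite !mxE sS !mul0r.
case rR: (r \in R); last by rewrite big1 // => j _; rewrite !mxE rR !mulr0.
pose k := Ordinal (ltn_pmod (a * s + b * r) n_gt0).
have kin : k \in ssum (smul a S) (smul b R).
  rewrite inE; apply/existsP; exists (mulo n_gt0 a s); rewrite (introT (smulP _ _ _ _)); last by exists s.
  apply/existsP; exists (mulo n_gt0 b r); rewrite (introT (smulP _ _ _ _)); last by exists r.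
  by rewrite /= modnDm.
have := congr1 (fun m : 'rV[F]_n => m 0 k) hc; rewrite Mx_tr_entry kin mxE => h; apply: (etrans _ h).
apply: eq_bigr => j _; rewrite !mxE sS rR mulrAC mulrC; congr (_ * _).
rewrite -!exprM -exprD -(prim_expr_mod prim) -[RHS](prim_expr_mod prim) /= modnMml.
by rewrite mulnDl !mulnA.
Qed.


Lemma roos (c : 'rV[F]_n) : (c <= dual M)%MS -> c != 0 -> (0 < #|S|)%N ->
  (hull_size S + 2 <= #|S| + dT G R)%N -> (hull_size S <= wt c)%N.
Proof.
move=> cC c0 S0 hyp.
set L := hull_size S; set I := [set j | c 0 j != 0].
have wI : wt c = #|I| by [].
rewrite leqNgt wI; apply/negP => wL.
have [c0' win] := hull_wnd n_gt0 S.
have Ln : (L <= n)%N := hull_le S.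
set D := diag_mx c.
have DI : D *m PJ F I = D.
  rewrite mul_PJ; apply/matrixP => i j; rewrite !mxE inE.
  case: (boolP (c 0 j == 0)) => [/eqP cj|_]; last by rewrite mulr1.
  by case: (i =P j) => [->|_]; rewrite ?cj ?mulr1n ?mulr0n ?mul0r.
set X := A' *m D; set Y := B' *m PJ F I.
have hXY : X *m Y^T = 0.
  rewrite /Y trmx_mul PJ_tr /X mulmxA -(mulmxA A') DI; exact: orth_ADB.
have hXI : X *m PJ F I = X by rewrite /X -mulmxA DI.
have hYI : Y *m PJ F I = Y by rewrite /Y -mulmxA PJ_mul setIid.
have ro := rank_orth hXY hXI hYI.
have rX : (#|S| + #|I| <= \rank X + L)%N.
  have cI : (L - #|I| <= #|~: I|)%N.
    have := cardsC I; rewrite card_ord => h; lia.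
  have [K [KI cK]] := exists_subset cI.
  set J := I :|: K.
  have IK : I :&: K = set0.
    apply/setP => j; rewrite !inE; apply/negP => /andP [jI jK].
    by have := subsetP KI j jK; rewrite !inE jI.
  have cJ : #|J| = L by rewrite cardsU IK cards0 subn0 cK; lia.
  have kerJ : (kermx (A' *m PJ F J) <= kermx A')%MS.
    apply/row_subP => i; rewrite sub_kermx; set r := row i _.
    have rz : r *m (A' *m PJ F J) = 0 by rewrite /r -row_mul mulmx_ker row0.
    apply/eqP; apply: (codeword_zero (primX prim coa) win (J := J)).
    - by rewrite cJ.
    - exact: submxMl.
    move=> j jJ; have := congr1 (fun m : 'rV[F]_n => m 0 j) rz.
    by rewrite mulmxA mul_PJ !mxE jJ mulr1.
  have h1 : (\rank A' <= \rank (A' *m PJ F J))%N.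
    have := mxrankS kerJ; rewrite !mxrank_ker.
    have := rank_leq_col A'; have := rank_leq_col (A' *m PJ F J); lia.
  have PJJ : PJ F J = PJ F I + PJ F K.
    apply/matrixP => i j; rewrite !mxE in_setU.
    case: (boolP (i \in I)) => iI; case: (boolP (i \in K)) => iK /=.
    - by have := subsetP KI i iK; rewrite in_setC iI.
    - by rewrite mul0rn addr0.
    - by rewrite mul0rn add0r.
    - by rewrite mul0rn addr0.
  have h2 : (\rank (A' *m PJ F J) <= \rank (A' *m PJ F I) + #|K|)%N.
    rewrite PJJ mulmxDr; apply: leq_trans (mxrank_add _ _) _.
    by rewrite leq_add2l -(rank_PJ F K) mxrankM_maxr.
  have h3 : (\rank (A' *m PJ F I) <= \rank X)%N.
    pose D' := diag_mx (\row_j (c 0 j)^-1).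
    have -> : A' *m PJ F I = X *m D'.
      rewrite /X -mulmxA; congr (_ *m _).
      rewrite mul_mx_diag; apply/matrixP => i j; rewrite !mxE inE.
      case: (i =P j) => [->|_]; last by rewrite !mulr0n mul0r.
      rewrite !mulr1n; case: (boolP (c 0 j == 0)) => [/eqP->|cj]; first by rewrite /= mul0r.
      by rewrite /= mulfV.
    exact: mxrankM_maxl.
  have h4 : \rank A' = #|S| := rank_Mx n_gt0 (primX prim coa) S.
  lia.
have rY : forall J : {set 'I_n}, J \subset I -> (#|J| < dT G R)%N -> (#|J| <= \rank Y)%N.
  move=> J JI JdR.
  have h1 : (\rank (B' *m PJ F J) <= \rank Y)%N.
    have -> : B' *m PJ F J = Y *m PJ F J by rewrite /Y -mulmxA PJ_mul (setIidPr JI).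
    exact: mxrankM_maxl.
  suff h2 : (#|J| <= \rank (B' *m PJ F J))%N by exact: leq_trans h2 h1.
  have kerJ : (kermx (B' *m PJ F J)^T <= kermx (PJ F J))%MS.
    apply/row_subP => i; rewrite sub_kermx; set r := row i _.
    have rz : r *m (B' *m PJ F J)^T = 0 by rewrite /r -row_mul mulmx_ker row0.
    set z := r *m PJ F J.
    have zd : (z <= dual B')%MS.
      by rewrite /dual sub_kermx /z -mulmxA -PJ_tr -trmx_mul rz.
    have wz : (wt z <= #|J|)%N.
      apply: subset_leq_card; apply/subsetP => j; rewrite inE /z mul_PJ mxE.
      by case: (boolP (j \in J)) => // _; rewrite mulr0 eqxx.
    apply/eqP; apply: contraTeq JdR => z0; rewrite -leqNgt.
    exact: leq_trans (dual_perm n_gt0 prim cob zd z0) wz.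
  have := mxrankS kerJ; rewrite !mxrank_ker mxrank_tr rank_PJ.
  have := rank_leq_col (B' *m PJ F J); have : (#|J| <= n)%N.
    by rewrite -[X in (_ <= X)%N]card_ord max_card.
  lia.
have dR1 : (0 < dT G R)%N by exact: mindist_pos.
case: (ltnP #|I| (dT G R)) => h.
  have := rY I (subxx I) h => hY.
  have X0 : \rank X = 0%N by lia.
  move/eqP: X0; rewrite mxrank_eq0 => /eqP X0.
  have [s sS] := card_gt0P S0.
  have [j cj] := nz_entry c0.
  have := congr1 (fun m : 'M[F]_n => m s j) X0.
  rewrite /X mul_mx_diag !mxE sS => /eqP; rewrite mulf_eq0 (negbTE cj) orbF.
  apply/negP; apply: expf_neq0; apply: expf_neq0.
  by rewrite (prim_root_eq0 prim) -lt0n.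
have [J [JI cJ]] := exists_subset (m := (dT G R).-1) (X := I) (leq_trans (leq_pred _) h).
have := rY J JI; rewrite cJ ltn_predL dR1 => /(_ isT) hY.
have hyp2 : (L + 2 <= #|S| + dT G R)%N := hyp.
exact: (arith1 ro rX hY hyp2 dR1).
Qed.

End Roos.

Lemma tri_sum l : ((\sum_(1 <= i < l.+1) i) * 2 = l * l.+1)%N.
Proof.
elim: l => [|l IH]; first by rewrite big_geq.
rewrite big_nat_recr //= mulnDl IH; lia.
Qed.

Lemma tri_div l : (0 < l)%N -> ((l * l.+1) %/ 2 = \sum_(1 <= i < l) i + l)%N.
Proof.
move=> l0; rewrite -tri_sum mulnK // big_nat_recr //.
Qed.

Lemma sum_lin l (x : int) (k : nat) (g : nat -> int) :
  \sum_(1 <= i < l.+1) (x - (i * k)%N%:Z + i%:Z - g i) =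
  l%:Z * x - (\sum_(1 <= i < l.+1) i)%N%:Z * (k%:Z - 1) - \sum_(1 <= i < l.+1) g i.
Proof.
elim: l => [|l IH]; first by rewrite !big_geq // mul0r mul0r !subr0.
rewrite [LHS]big_nat_recr // IH (big_nat_recr l.+1 1 (fun i => i)) // (big_nat_recr l.+1 1 g) // /=.
rewrite PoszD PoszM -(addn1 l) PoszD; ring.
Qed.

End Helpers.
Import Helpers.

Theorem theorem6p4 (Fq : finFieldType) (F : fieldType) (iota : {rmorphism Fq -> F})
    (n : nat) (gamma : F) (l t a b : nat) (S R : {set 'I_n})
    (delta : int) (gam : nat -> int) :
  (0 < n)%N -> coprime n #|Fq| -> n.-primitive_root gamma -> (2 <= l)%N ->
  (0 < a <= n)%N -> (0 < b <= n)%N -> coprime a n -> coprime b n ->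
  (hull_size S + 2 <= #|S| + dT gamma R)%N -> (t < #|S|)%N -> (t < dT gamma S)%N ->
  let A := Mx gamma (smul a S) in
  let B := Mx gamma (smul b R) in
  let Ct := dual (Mx gamma (ssum (smul a S) (smul b R))) in
  let k := \rank Ct in
  (forall i : nat, (0 < i < l)%N -> ~~ row_full (cprod (dual B) (cpow Ct i))) ->
  (forall H : 'M[F]_n, (H <= B)%MS -> cyclic_code H -> H != 0 -> ~~ degenerated H) ->
  n%:Z - k%:Z = (#|S| + #|R|)%N%:Z - 1 + delta ->
  (forall i : nat, (0 < i < l)%N ->
     (\rank B)%:Z = (\rank (dual (cprod (dual B) (cpow Ct i))))%:Z
                    + (i * k)%N%:Z - i%:Z + gam i) ->
  t%:Z <= (l * n)%N%:Z - (((l * l.+1) %/ 2)%N%:Z * (k%:Z - 1)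
                          + l%:Z * (#|S|%:Z + delta)
                          + \sum_(1 <= i < l) gam i) ->
  locating_pair l t A B Ct.
Proof.
move=> n0 _ prim l2 _ _ coa cob hhull tS tdS A B Ct k _ _ hdelta hgam ht.
have S0 : (0 < #|S|)%N by apply: leq_ltn_trans tS.
have Sn : (#|S| <= n)%N by rewrite -[X in (_ <= X)%N]card_ord max_card.
set L := hull_size S.
have Ln : (L <= n)%N := hull_le S.
have [c0 win] := hull_wnd n0 S.
have eA : (A == Mx (gamma ^+ a) S)%MS := Mx_smul n0 prim a S.
have eB : (B == Mx (gamma ^+ b) R)%MS := Mx_smul n0 prim b R.
have rB : \rank B = #|R| by rewrite /B (rank_Mx n0 prim) (card_smul n0 prim _ cob).
split.
-
  rewrite /cprod; apply/sumsmx_subP => i _; apply/sumsmx_subP => j _; rewrite genmxE.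
  apply: sub_dual_dual.
  rewrite /A /B !row_Mx.
  case iS: (i \in smul a S); last first.
    by rewrite (_ : rowprod _ _ = 0) ?sub0mx //; apply/rowP => x; rewrite !mxE mul0r.
  case jR: (j \in smul b R); last first.
    by rewrite (_ : rowprod _ _ = 0) ?sub0mx //; apply/rowP => x; rewrite !mxE mulr0.
  pose kk := Ordinal (ltn_pmod (i + j) n0).
  have kin : kk \in ssum (smul a S) (smul b R).
    by rewrite inE; apply/existsP; exists i; rewrite iS /=; apply/existsP; exists j; rewrite jR /=.
  have -> : rowprod (\row_j0 gamma ^+ (i * j0)) (\row_j0 gamma ^+ (j * j0)) =
            row kk (Mx gamma (ssum (smul a S) (smul b R))).
    rewrite row_Mx kin; apply/rowP => x; rewrite !mxE -exprD.
    rewrite -(prim_expr_mod prim) -[RHS](prim_expr_mod prim) /= modnMml.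
    by rewrite mulnDl.
  exact: row_sub.
-
  by rewrite /A (rank_Mx n0 prim) (card_smul n0 prim _ coa).
-
  apply: mindist_ge; first by rewrite ltnS ltnW // (leq_trans tS Sn).
  move=> v vA v0.
  have vA' : (v <= dual (Mx (gamma ^+ a) S))%MS.
    by apply: submx_trans vA _; case/andP: (dual_eqmx eA).
  exact: leq_trans tdS (dual_perm n0 prim coa vA' v0).
-
  have hA : ((n - L).+1 <= mindist A)%N.
    apply: mindist_ge; first by rewrite ltnS leq_subr.
    move=> x xA x0.
    have xA' : (x <= Mx (gamma ^+ a) S)%MS by apply: submx_trans xA _; case/andP: eA.
    set Z := [set j | x 0 j == 0].
    have ZL : (#|Z| < L)%N.
      rewrite ltnNge; apply/negP => LZ; move/eqP: x0; apply.
      by apply: (codeword_zero (primX prim coa) win LZ xA') => j; rewrite inE => /eqP.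
    have wZ : (wt x + #|Z| = n)%N.
      rewrite /wt -[RHS](card_ord n) -(cardsC Z) addnC; congr (_ + _).
      by apply: eq_card => j; rewrite !inE.
    lia.
  have hC : (L <= mindist Ct)%N.
    apply: mindist_ge; first by rewrite (leq_trans Ln).
    move=> c cC c0'; exact: (roos n0 prim coa cob cC c0' S0 hhull).
  lia.
-
  have [l' El] : exists l', l = l'.+1 by exists l.-1; rewrite prednK // ltnW.
  subst l.
  rewrite big_add1 /= -lez_nat PoszD (big_morph Posz PoszD (erefl (Posz 0%N))).
  rewrite (eq_big_nat _ _ (F2 := fun i => (\rank B)%:Z - (i * k)%N%:Z + i%:Z - gam i)); last first.
    by move=> i Hi; rewrite (hgam i Hi); ring.
  rewrite sum_lin.
  rewrite (tri_div (ltn0Sn l')) PoszD in ht.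
  have eR : (#|R|)%:Z = n%:Z - k%:Z - #|S|%:Z + 1 - delta.
    move: hdelta; rewrite PoszD => h.
    by rewrite h; ring.
  apply: le_trans ht _; rewrite le_eqVlt; apply/orP; left; apply/eqP.
  rewrite rB eR PoszM -(addn1 l') PoszD; ring.
Qed.
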